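(* Let $E$ be a finite nonempty set. (1) For every CAR mechanism $\pi$ on $E$ and every $\epsilon>0$ there exists a rational CAR mechanism $\pi'$ on $E$ with $\|\pi-\pi'\|<\epsilon$. (2) Every CAR mechanism on $E$ is exactly equal to a finite mixture of extreme CAR mechanisms, each of which is rational (hence generated by a uniform multicover). Equivalently, every CAR mechanism arises from the following procedure for suitable choices of finitely many uniform multicovers $\mathcal C_1,\dots,\mathcal C_p$ of $E$ (of heights $k_1,\dots,k_p$) and a probability vector $(\lambda_1,\dots,\lambda_p)$: given $x\in E$, choose index $j$ with probability $\lambda_j$ independently of $x$, then choose uniformly at random (probability $1/k_j$ each, counting multiplicity) one of the $k_j$ sets of $\mathcal C_j$ containing $x$. *)

(* Defs.v *)
From mathcomp Require Import all_boot all_order all_algebra.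
From mathcomp Require Import reals.
Set Implicit Arguments. Unset Strict Implicit. Unset Printing Implicit Defensive.
Import Order.TTheory GRing.Theory Num.Theory.
Local Open Scope ring_scope.

(* A (coarsening) mechanism on a finite set E: pi A x = probability of
   reporting the set A when the true value is x. *)
Definition mechanism (R : realType) (E : finType) := {set E} -> E -> R.

Definition is_CAR (R : realType) (E : finType) (pi : mechanism R E) : Prop :=
  [/\ (forall (A : {set E}) (x : E), 0 <= pi A x),
      (forall (A : {set E}) (x : E), x \notin A -> pi A x = 0),
      (forall x, \sum_(A : {set E} | x \in A) pi A x = 1)
    & (forall (A : {set E}) (x y : E), x \in A -> y \in A -> pi A x = pi A y)].

Definition mech_dist (R : realType) (E : finType) (pi pi' : mechanism R E) : R :=
  \big[Num.max/0]_(A : {set E}) \big[Num.max/0]_(x : E) `|pi A x - pi' A x|.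

Definition is_rat_real (R : realType) (r : R) : Prop := exists q : rat, r = ratr q.

Definition rational_mech (R : realType) (E : finType) (pi : mechanism R E) : Prop :=
  forall (A : {set E}) (x : E), is_rat_real (pi A x).

Definition extreme_CAR (R : realType) (E : finType) (pi : mechanism R E) : Prop :=
  is_CAR pi /\
  forall (pi1 pi2 : mechanism R E) (t : R), is_CAR pi1 -> is_CAR pi2 ->
    0 < t < 1 -> (forall (A : {set E}) (x : E), pi A x = t * pi1 A x + (1 - t) * pi2 A x) ->
    forall (A : {set E}) (x : E), pi1 A x = pi2 A x.

(* A uniform multicover of E of height k: a multiset of nonempty subsets of E
   (given by multiplicities m) such that every x lies in exactly k of them
   (counted with multiplicity). *)
Definition uniform_multicover (E : finType) (m : {set E} -> nat) (k : nat) : Prop :=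
  [/\ (0 < k)%N, m set0 = 0%N & forall x : E, (\sum_(A : {set E} | x \in A) m A)%N = k].

Definition multicover_mech (R : realType) (E : finType) (m : {set E} -> nat) (k : nat)
  : mechanism R E :=
  fun A x => if x \in A then (m A)%:R / k%:R else 0.

(* Main.v *)
Require Import Defs.
From mathcomp Require Import all_boot all_order all_algebra.
From mathcomp Require Import reals.
From mathcomp Require Import ring lra.
From Stdlib Require Import Classical.
Set Implicit Arguments. Unset Strict Implicit. Unset Printing Implicit Defensive.
Import Order.TTheory GRing.Theory Num.Theory.
Local Open Scope ring_scope.

Section Main.
Variables (R : realType) (E : finType).
Local Notation T := {set E}.

Definition mk (q : T -> R) : mechanism R E := fun A x => if x \in A then q A else 0.
Definition qof (pi : mechanism R E) (A : T) : R :=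
  if [pick x in A] is Some x then pi A x else 0.
Definition Qcar (q : T -> R) :=
  [/\ forall A, 0 <= q A, q set0 = 0 & forall x, \sum_(A : T | x \in A) q A = 1].
Definition basic (q : T -> R) := Qcar q /\
  forall d : T -> R, (forall A, q A = 0 -> d A = 0) ->
    (forall x, \sum_(A : T | x \in A) d A = 0) -> forall A, d A = 0.

Lemma qofK pi : is_CAR pi -> forall A x, mk (qof pi) A x = pi A x.
Proof.
case=> H0 Hn Hs Hc A x; rewrite /mk /qof; case: ifP => xA.
  case: pickP => [y yA|/(_ x)]; last by rewrite xA.
  exact: Hc.
by rewrite Hn // xA.
Qed.

Lemma Qcar_qof pi : is_CAR pi -> Qcar (qof pi).
Proof.
move=> C; have [H0 Hn Hs Hc] := C; split.
- by move=> A; rewrite /qof; case: pickP.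
- by rewrite /qof; case: pickP => [y|//]; rewrite in_set0.
- move=> x; rewrite -(Hs x); apply: eq_bigr => A xA.
  by rewrite -(qofK C) /mk xA.
Qed.

Lemma CAR_mk q : Qcar q -> is_CAR (mk q).
Proof.
case=> H0 H1 Hs; split.
- by move=> A x; rewrite /mk; case: ifP.
- by move=> A x xA; rewrite /mk (negbTE xA).
- by move=> x; rewrite -(Hs x); apply: eq_bigr => A xA; rewrite /mk xA.
- by move=> A x y xA yA; rewrite /mk xA yA.
Qed.

Lemma basic_extreme q : basic q -> extreme_CAR (mk q).
Proof.
case=> Hq Hb; split; first exact: CAR_mk.
move=> pi1 pi2 t C1 C2 /andP[t0 t1] Hmix A x.
suff H : forall B, qof pi1 B = qof pi2 B by rewrite -(qofK C1) -(qofK C2) /mk H.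
move=> B; apply/eqP; rewrite -subr_eq0; apply/eqP.
apply: (Hb (fun B => qof pi1 B - qof pi2 B)).
- move=> D qD0; rewrite /qof; case: pickP => [y yD|_]; last by rewrite subrr.
  have := Hmix D y; rewrite /mk yD qD0 => /esym/eqP.
  have [P10 _ _ _] := C1; have [P20 _ _ _] := C2.
  rewrite paddr_eq0 ?mulr_ge0 ?subr_ge0 ?(ltW t0) ?(ltW t1) //.
  rewrite !mulf_eq0 (gt_eqF t0) subr_eq0 (gt_eqF t1) /= => /andP[/eqP -> /eqP ->].
  by rewrite subrr.
- move=> y; rewrite sumrB.
  by have [_ _ ->] := Qcar_qof C1; have [_ _ ->] := Qcar_qof C2; rewrite subrr.
Qed.

Definition Mx (F : fieldType) (S : {set T}) : 'M[F]_(#|{: T}|, #|{: E}|) :=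
  \matrix_(i < #|{: T}|, j < #|{: E}|)
    (if ((enum_val j : E) \in (enum_val i : T)) && ((enum_val i : T) \in S) then 1 else 0).

Lemma Mx_map S : map_mx (@ratr R) (Mx rat S) = Mx R S.
Proof. by apply/matrixP => i j; rewrite !mxE; case: ifP; rewrite ?rmorph1 ?rmorph0. Qed.

Lemma mulMx (F : fieldType) S (u : 'rV[F]_#|{: T}|) x :
  (u *m Mx F S) 0 (enum_rank x) =
  \sum_(A : T | x \in A) (if A \in S then u 0 (enum_rank A) else 0).
Proof.
rewrite mxE (reindex enum_rank) /=; last exact: onW_bij (@enum_rank_bij _).
rewrite [RHS]big_mkcond; apply: eq_bigr => A _; rewrite mxE !enum_rankK.
by case: (x \in A); case: (A \in S); rewrite ?mulr1 ?mulr0.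
Qed.

Lemma basic_rat q : basic q -> forall A, is_rat_real (q A).
Proof.
case=> [[H0 H1 Hs] Hb].
pose S := [set A | q A != 0].
pose v : 'rV[R]_#|{: T}| := \row_i q (enum_val i).
have hv : v *m Mx R S = (const_mx 1 : 'rV[R]_#|{: E}|).
  apply/matrixP => i j; rewrite ord1 -(enum_valK j) mulMx mxE.
  rewrite -(Hs (enum_val j)); apply: eq_bigr => A _.
  rewrite mxE enum_rankK inE; case: eqP => // ->.
have : ((const_mx 1 : 'rV[rat]_#|{: E}|) <= Mx rat S)%MS.
  have h : (map_mx (@ratr R) (const_mx 1 : 'rV[rat]_#|{: E}|) <= map_mx (@ratr R) (Mx rat S))%MS.
    by rewrite map_const_mx rmorph1 Mx_map -hv submxMl.
  by rewrite map_submx in h.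
case/submxP => y hy.
have hy' : (const_mx 1 : 'rV[R]_#|{: E}|) = map_mx (@ratr R) y *m Mx R S.
  by rewrite -Mx_map -map_mxM -hy map_const_mx rmorph1.
pose w A := if A \in S then ratr (y 0 (enum_rank A)) else 0 : R.
have hd := Hb (fun A => q A - w A).
move=> A; exists (if A \in S then y 0 (enum_rank A) else 0).
have -> : q A = w A.
  apply/eqP; rewrite -subr_eq0; apply/eqP; apply: hd.
  - move=> B qB0; rewrite /w inE qB0 eqxx /=; exact: subrr.
  - move=> x; rewrite sumrB Hs.
    have := congr1 (fun M : 'rV[R]_#|{: E}| => M 0 (enum_rank x)) hy'.
    rewrite mxE mulMx => hx.
    suff -> : \sum_(B : T | x \in B) w B = 1 by rewrite subrr.
    rewrite hx; apply: eq_bigr => B _.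
    by rewrite /w; case: ifP => //; rewrite mxE.
by rewrite /w; case: ifP; rewrite ?rmorph0.
Qed.

Definition supp (q : T -> R) := [set A | q A != 0].

Lemma step q (d : T -> R) : Qcar q -> (forall A, q A = 0 -> d A = 0) ->
  (forall x, \sum_(A : T | x \in A) d A = 0) -> (exists A, d A < 0) ->
  exists t, 0 < t /\ Qcar (fun A => q A + t * d A) /\
    supp (fun A => q A + t * d A) \proper supp q.
Proof.
case=> H0 H1 Hs Hd Hk [A0 dA0].
pose F A := q A / - d A.
have [A1 dA1 Hmin] := @arg_minP _ _ _ A0 (fun A => d A < 0) F dA0.
set t := F A1.
have qA1 : 0 < q A1.
  rewrite lt_def H0 andbT; apply/eqP => h; move: dA1; by rewrite (Hd _ h) ltxx.
have dA1' : 0 < - d A1 by rewrite oppr_gt0.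
have t0 : 0 < t by rewrite /t /F divr_gt0.
exists t; split=> //; split; first split.
- move=> A; case: (ltP (d A) 0) => hA.
  + have := Hmin A hA; rewrite /F ler_pdivlMr ?oppr_gt0 //.
    by rewrite mulrN -subr_ge0 opprK addrC.
  + by rewrite addr_ge0 ?H0 // mulr_ge0 // ltW.
- by rewrite H1 (Hd _ H1) mulr0 addr0.
- by move=> x; rewrite big_split /= -mulr_sumr Hs Hk mulr0 addr0.
rewrite properE; apply/andP; split.
  apply/subsetP => A; rewrite !inE => h; apply/eqP => qA0; move: h.
  by rewrite qA0 (Hd _ qA0) mulr0 addr0 eqxx.
apply/subsetPn; exists A1; first by rewrite inE gt_eqF.
rewrite inE negbK /t /F; apply/eqP.
have hd : d A1 != 0 by rewrite lt_eqF.
by field.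
Qed.

Lemma has_neg q (d : T -> R) (A0 : T) : Qcar q -> (forall A, q A = 0 -> d A = 0) ->
  (forall x, \sum_(A : T | x \in A) d A = 0) -> d A0 != 0 -> exists A, d A < 0.
Proof.
case=> H0 H1 Hs Hd Hk dA0; apply: NNPP => hn.
have pos : forall A, 0 <= d A.
  by move=> A; rewrite leNgt; apply/negP => h; apply: hn; exists A.
have : A0 != set0 by apply: contraNneq dA0 => ->; rewrite Hd.
case/set0Pn => x xA0.
have := psumr_eq0P (fun A _ => pos A) (Hk x) xA0.
by move/eqP; rewrite (negbTE dA0).
Qed.

Definition mixture (q : T -> R) := exists p (lam : 'I_p -> R) (qs : 'I_p -> T -> R),
  [/\ forall j, 0 <= lam j, \sum_(j < p) lam j = 1, forall j, basic (qs j)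
    & forall A, q A = \sum_(j < p) lam j * qs j A].

Lemma split_l m n (i : 'I_m) : split (lshift n i) = inl i.
Proof. exact: (unsplitK (inl _ i)). Qed.
Lemma split_r m n (i : 'I_n) : split (rshift m i) = inr i.
Proof. exact: (unsplitK (inr _ i)). Qed.

Lemma mixture_comb q c q1 q2 : 0 <= c <= 1 -> mixture q1 -> mixture q2 ->
  (forall A, q A = c * q1 A + (1 - c) * q2 A) -> mixture q.
Proof.
case/andP=> c0 c1 [p1 [l1 [s1 [l10 l11 s1b s1e]]]] [p2 [l2 [s2 [l20 l21 s2b s2e]]]] he.
exists (p1 + p2)%N.
exists (fun j => match split j with inl i => c * l1 i | inr i => (1 - c) * l2 i end).
exists (fun j => match split j with inl i => s1 i | inr i => s2 i end).
split.
- by move=> j; case: split => i; rewrite mulr_ge0 ?subr_ge0.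
- rewrite big_split_ord /=.
  under eq_bigr do rewrite split_l.
  under [X in _ + X = _]eq_bigr do rewrite split_r.
  by rewrite -!mulr_sumr l11 l21 !mulr1 addrC subrK.
- by move=> j; case: split.
- move=> A; rewrite he big_split_ord /=.
  under [X in _ = X + _]eq_bigr do rewrite split_l.
  under [X in _ = _ + X]eq_bigr do rewrite split_r.
  rewrite s1e s2e !mulr_sumr; congr (_ + _); apply: eq_bigr => j _; by rewrite mulrA.
Qed.

Lemma decomp q : Qcar q -> mixture q.
Proof.
move: {2}#|supp q| (erefl #|supp q|) => n; elim/ltn_ind: n q => n IH q hn Hq.
case: (classic (basic q)) => hb.
  exists 1%N, (fun _ => 1), (fun _ => q); split => //.
  - by rewrite big_ord1.
  - by move=> A; rewrite big_ord1 mul1r.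
have [d [A0 [hs hk hA0]]] : exists (d : T -> R) (A0 : T), [/\ forall A, q A = 0 -> d A = 0,
   forall x, \sum_(A : T | x \in A) d A = 0 & d A0 != 0].
  apply: NNPP => H; apply: hb; split => // d h1 h2 A; apply: NNPP => hA.
  by apply: H; exists d, A; split => //; apply/eqP.
have hsN : forall A, q A = 0 -> - d A = 0 by move=> A /hs ->; rewrite oppr0.
have hkN : forall x, \sum_(A : T | x \in A) - d A = 0.
  by move=> x; rewrite sumrN hk oppr0.
have [t1 [t10 [Q1 P1]]] := step Hq hs hk (has_neg Hq hs hk hA0).
have hA0N : - d A0 != 0 by rewrite oppr_eq0.
have [t2 [t20 [Q2 P2]]] := step Hq hsN hkN (@has_neg q (fun A => - d A) A0 Hq hsN hkN hA0N).
have M1 := IH _ _ _ (erefl _) Q1.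
have M2 := IH _ _ _ (erefl _) Q2.
rewrite -hn in M1 M2.
have ht : t1 + t2 != 0 by rewrite gt_eqF // addr_gt0.
apply: (mixture_comb (c := t2 / (t1 + t2))) (M1 (proper_card P1)) (M2 (proper_card P2)) _.
  apply/andP; split; first by rewrite divr_ge0 // ltW // addr_gt0.
  rewrite ler_pdivrMr ?addr_gt0 // mul1r lerDr ltW //.
move=> A; field; exact: ht.
Qed.

Lemma basic_cover q : basic q -> exists c : ({set E} -> nat) * nat,
  uniform_multicover c.1 c.2 /\ forall A x, mk q A x = multicover_mech R c.1 c.2 A x.
Proof.
move=> hb; have [[H0 H1 Hs] _] := hb.
have [r hr] := fin_all_exists (fun A => basic_rat hb A).
have r0 : forall A, 0 <= r A by move=> A; have := H0 A; rewrite hr ler0q.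
have rs0 : r set0 = 0.
  by have := hr set0; rewrite H1 => /esym/eqP; rewrite fmorph_eq0 => /eqP.
have rsum : forall x, \sum_(A : T | x \in A) r A = 1.
  move=> x; have := Hs x; under eq_bigr do rewrite hr.
  by rewrite -rmorph_sum => /eqP; rewrite fmorph_eq1 => /eqP.
pose k := (\prod_(A : T) `|denq (r A)|)%N.
have k0 : (0 < k)%N by rewrite prodn_gt0 // => A; rewrite absz_gt0 denq_neq0.
have hint : forall A, r A * k%:R \is a Num.nat.
  move=> A; rewrite natrEint mulr_ge0 ?ler0n // andbT.
  rewrite /k (bigD1 A) //= natrM mulrA.
  have -> : r A * (`|denq (r A)|%N)%:R = (numq (r A))%:~R.
    rewrite natr_absz gtr0_norm ?denq_gt0 //.
    have e := divq_num_den (r A).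
    by rewrite -{1}e mulfVK // intr_eq0 denq_neq0.
  by rewrite rpredM ?intr_int ?natr_int.
pose m A := Num.truncn (r A * k%:R).
have hm : forall A, (m A)%:R = r A * k%:R by move=> A; exact: truncnK (hint A).
exists (m, k); split.
  split => //=.
    by apply/eqP; rewrite -(eqr_nat rat) hm rs0 mul0r.
  move=> x; apply/eqP; rewrite -(eqr_nat rat) natr_sum.
  under eq_bigr do rewrite hm.
  by rewrite -mulr_suml rsum mul1r.
move=> A x; rewrite /mk /multicover_mech /=; case: ifP => // _.
have -> : (m A)%:R = ratr ((m A)%:R) :> R by rewrite ratr_nat.
rewrite hm rmorphM rmorph_nat mulfK; [exact: hr|by rewrite pnatr_eq0 -lt0n].
Qed.

Lemma rat_add x y : is_rat_real x -> is_rat_real y -> is_rat_real (x + y :> R).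
Proof. by case=> a -> [b ->]; exists (a + b); rewrite rmorphD. Qed.
Lemma rat_mul x y : is_rat_real x -> is_rat_real y -> is_rat_real (x * y :> R).
Proof. by case=> a -> [b ->]; exists (a * b); rewrite rmorphM. Qed.
Lemma rat_opp x : is_rat_real x -> is_rat_real (- x :> R).
Proof. by case=> a ->; exists (- a); rewrite rmorphN. Qed.
Lemma rat_inv x : is_rat_real x -> is_rat_real (x^-1 :> R).
Proof. by case=> a ->; exists (a^-1); rewrite fmorphV. Qed.
Lemma rat_int z : is_rat_real (z%:~R : R).
Proof. by exists z%:~R; rewrite rmorph_int. Qed.
Lemma rat_nat n : is_rat_real (n%:R : R).
Proof. by exists n%:R; rewrite ratr_nat. Qed.
Lemma rat_sum I (r : seq I) (P : pred I) (F : I -> R) :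
  (forall i, P i -> is_rat_real (F i)) -> is_rat_real (\sum_(i <- r | P i) F i).
Proof.
move=> h; apply: (big_ind (fun v => is_rat_real v)) => //.
  by exists 0; rewrite rmorph0.
exact: rat_add.
Qed.

Lemma approx p (lam : 'I_p -> R) (eps : R) : (forall j, 0 <= lam j) ->
  \sum_(j < p) lam j = 1 -> 0 < eps ->
  exists lam' : 'I_p -> R, [/\ forall j, 0 <= lam' j, \sum_(j < p) lam' j = 1,
    forall j, is_rat_real (lam' j) & \sum_(j < p) `|lam j - lam' j| < eps].
Proof.
case: p lam => [|p] lam H0 Hs e0.
  by move: Hs; rewrite big_ord0 => /eqP; rewrite eq_sym oner_eq0.
pose N := (Num.truncn (2 * p.+1%:R / eps)).+1.
have N0 : 0 < N%:R :> R by rewrite ltr0n.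
have hN : 2 * (p.+1%:R * N%:R^-1) < eps.
  rewrite mulrA ltr_pdivrMr //.
  have := truncnS_gt (2 * p.+1%:R / eps).
  by rewrite ltr_pdivrMr // [eps * _]mulrC.
pose f (j : 'I_p.+1) : R := (Num.floor (N%:R * lam j))%:~R / N%:R.
have f0 : forall j, 0 <= f j.
  by move=> j; rewrite divr_ge0 ?ler0n // ler0z floor_ge0 mulr_ge0 ?ler0n.
have fle : forall j, f j <= lam j.
  by move=> j; rewrite /f ler_pdivrMr // mulrC floor_le.
have flt : forall j, lam j - f j <= N%:R^-1.
  move=> j; have := floor_lt_int (N%:R * lam j) (Num.floor (N%:R * lam j) + 1).
  rewrite ltzD1 lexx intrD => /esym/ltW h.
  have -> : lam j = (N%:R * lam j) / N%:R by field; rewrite gt_eqF.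
  rewrite /f -mulrBl -[X in _ <= X]mul1r ler_pM2r ?invr_gt0 //.
  move: h; set a := N%:R * lam j; set b := (Num.floor a)%:~R; lra.
pose lam' (j : 'I_p.+1) := if j == ord0 then 1 - \sum_(i | i != ord0) f i else f j.
have hsplit : 1 = lam ord0 + \sum_(i | i != ord0) lam i by rewrite -Hs (bigD1 ord0).
have hle : \sum_(i | i != ord0) f i <= \sum_(i | i != ord0) lam i.
  by apply: ler_sum => i _; apply: fle.
have hf : \sum_(i | i != ord0) lam' i = \sum_(i | i != ord0) f i.
  by apply: eq_bigr => i /negbTE; rewrite /lam' => ->.
exists lam'; split.
- move=> j; rewrite /lam'; case: ifP => // _.
  have := H0 ord0; lra.
- by rewrite (bigD1 ord0) //= hf /lam' eqxx subrK.
- move=> j; rewrite /lam'; case: ifP => _.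
    apply: rat_add; first by exists 1; rewrite rmorph1.
    by apply: rat_opp; apply: rat_sum => i _; apply: rat_mul; [apply: rat_int|apply: rat_inv; apply: rat_nat].
  by apply: rat_mul; [apply: rat_int|apply: rat_inv; apply: rat_nat].
rewrite (bigD1 ord0) //=.
have -> : \sum_(i | i != ord0) `|lam i - lam' i| = \sum_(i | i != ord0) (lam i - f i).
  apply: eq_bigr => i /negbTE hi; rewrite /lam' hi ger0_norm // subr_ge0; exact: fle.
have hD : \sum_(i | i != ord0) (lam i - f i) = \sum_(i | i != ord0) lam i - \sum_(i | i != ord0) f i.
  by rewrite sumrB.
have hDle : \sum_(i | i != ord0) (lam i - f i) <= \sum_(i : 'I_p.+1 | i != ord0) N%:R^-1 :> R.
  by apply: ler_sum => i _; apply: flt.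
have hc : \sum_(i : 'I_p.+1 | i != ord0) N%:R^-1 <= p.+1%:R * N%:R^-1 :> R.
  apply: le_trans (_ : \sum_(i < p.+1) N%:R^-1 <= _).
    rewrite [X in _ <= X](bigD1 ord0) //= lerDr invr_ge0 ler0n //.
  by rewrite sumr_const card_ord mulr_natl.
rewrite /lam' eqxx.
have -> : lam ord0 - (1 - \sum_(i | i != ord0) f i) = - \sum_(i | i != ord0) (lam i - f i).
  rewrite hD; lra.
rewrite normrN ger0_norm; last by rewrite hD subr_ge0.
lra.
Qed.

Lemma Qle1 q A : Qcar q -> q A <= 1.
Proof.
case=> H0 H1 Hs; have [->|/set0Pn [x xA]] := eqVneq A set0; first by rewrite H1 ler01.
by rewrite -(Hs x) (bigD1 A) //= lerDl sumr_ge0.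
Qed.

Lemma dist_lt (pi pi' : mechanism R E) eps : 0 < eps ->
  (forall A x, `|pi A x - pi' A x| < eps) -> mech_dist pi pi' < eps.
Proof.
move=> e0 h; rewrite /mech_dist.
apply: (big_ind (fun v => v < eps)) => //.
  by move=> a b ha hb; rewrite gt_max ha hb.
move=> A _; apply: (big_ind (fun v => v < eps)) => //.
  by move=> a b ha hb; rewrite gt_max ha hb.
Qed.

End Main.

Theorem theorem2 (R : realType) (E : finType) (hE : (0 < #|E|)%N) :
  (* (1) density of rational CAR mechanisms *)
  (forall (pi : mechanism R E) (eps : R), is_CAR pi -> 0 < eps ->
     exists pi' : mechanism R E,
       [/\ is_CAR pi', rational_mech pi' & mech_dist pi pi' < eps]) /\
  (* (2) exact finite mixture of rational extreme CAR mechanisms *)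
  (forall pi : mechanism R E, is_CAR pi ->
     exists (p : nat) (lam : 'I_p -> R) (pis : 'I_p -> mechanism R E),
       [/\ (forall j, 0 <= lam j), \sum_(j < p) lam j = 1,
           (forall j, extreme_CAR (pis j) /\ rational_mech (pis j))
         & forall (A : {set E}) (x : E), pi A x = \sum_(j < p) lam j * pis j A x]) /\
  (* (2') equivalently, mixture of uniform-multicover procedures *)
  (forall pi : mechanism R E, is_CAR pi ->
     exists (p : nat) (lam : 'I_p -> R) (ms : 'I_p -> {set E} -> nat) (ks : 'I_p -> nat),
       [/\ (forall j, 0 <= lam j), \sum_(j < p) lam j = 1,
           (forall j, uniform_multicover (ms j) (ks j))
         & forall (A : {set E}) (x : E), pi A x = \sum_(j < p) lam j * multicover_mech R (ms j) (ks j) A x]).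
Proof.
have mixmk : forall (pi : mechanism R E) p (lam : 'I_p -> R) (qs : 'I_p -> {set E} -> R),
    is_CAR pi -> (forall A, qof pi A = \sum_(j < p) lam j * qs j A) ->
    forall A x, pi A x = \sum_(j < p) lam j * mk (qs j) A x.
  move=> pi p lam qs C qe A x; rewrite -(qofK C) /mk; case: ifP => _; first exact: qe.
  by rewrite big1 // => j _; rewrite mulr0.
split; [|split].
- move=> pi eps C e0.
  have [p [lam [qs [l0 l1 qb qe]]]] := decomp (Qcar_qof C).
  have [lam' [l0' l1' lr lerr]] := approx l0 l1 e0.
  pose q' A := \sum_(j < p) lam' j * qs j A.
  have Qq' : Qcar q'.
    split.
    + move=> A; apply: sumr_ge0 => j _; apply: mulr_ge0 => //.
      by have [[? _ _] _] := qb j.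
    + by rewrite /q' big1 // => j _; have [[_ -> _] _] := qb j; rewrite mulr0.
    + move=> x; rewrite /q' exchange_big /= -l1'; apply: eq_bigr => j _.
      by rewrite -mulr_sumr; have [[_ _ ->] _] := qb j; rewrite mulr1.
  exists (mk q'); split.
  + exact: CAR_mk.
  + move=> A x; rewrite /mk; case: ifP => _; last by exists 0; rewrite rmorph0.
    apply: rat_sum => j _; apply: rat_mul => //; exact: basic_rat.
  + apply: (@dist_lt R E pi (mk q') eps e0) => A x.
    rewrite (mixmk _ _ _ _ C qe) /mk; case: ifP => _; last first.
      by rewrite big1 ?subrr ?normr0 // => j _; rewrite mulr0.
    rewrite /q' -sumrB.
    under eq_bigr do rewrite -mulrBl.
    apply: le_lt_trans (ler_norm_sum _ _ _) _; apply: le_lt_trans lerr.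
    apply: ler_sum => j _; rewrite normrM ler_piMr ?normr_ge0 //.
    have [Qj _] := qb j; have [h0 _ _] := Qj.
    by rewrite ger0_norm ?h0 // Qle1.
- move=> pi C.
  have [p [lam [qs [l0 l1 qb qe]]]] := decomp (Qcar_qof C).
  exists p, lam, (fun j => mk (qs j)); split => //.
    move=> j; split; first exact: basic_extreme.
    move=> A x; rewrite /mk; case: ifP => _; last by exists 0; rewrite rmorph0.
    exact: basic_rat.
  exact: mixmk.
- move=> pi C.
  have [p [lam [qs [l0 l1 qb qe]]]] := decomp (Qcar_qof C).
  have [cv hcv] := fin_all_exists (fun j => basic_cover (qb j)).
  exists p, lam, (fun j => (cv j).1), (fun j => (cv j).2); split => //.
    by move=> j; have [] := hcv j.
  move=> A x; rewrite (mixmk _ _ _ _ C qe); apply: eq_bigr => j _.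
  by have [_ ->] := hcv j.
Qed.
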